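(* Let $\mu\in(0,1/2]$. For every $c<c_J$, both $R^E_{\text{ext}}(c)<2$ and $R^M_{\text{ext}}(c)<2$.
   Context: $c_J=-1-2\sqrt{\mu(1-\mu)}$. $K(k)=\int_0^{\pi/2}(1-k^2\sin^2\theta)^{-1/2}d\theta$ is the complete elliptic integral of the first kind. $R^E_{\text{ext}}(c)=\frac{\pi}{2}\frac{1}{\sqrt{1-2k_E^2}K(k_E)}$ with $k_E^2=\frac12\big(1-\frac{1-2\mu-c}{\sqrt{c^2-2(1-2\mu)c+1}}\big)$, and $R^M_{\text{ext}}(c)=\frac{\pi}{2}\frac{1}{\sqrt{1-2k_M^2}K(k_M)}$ with $k_M^2=\frac12\big(1+\frac{c+1-2\mu}{\sqrt{c^2+2(1-2\mu)c+1}}\big)$; these are the rotation numbers of the exterior collision orbits of the Euler problem (mass ratio $\mu$) near the Earth and near the Moon. *)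

(* Defs.v *)
From Stdlib Require Import Reals ClassicalEpsilon.
Open Scope R_scope.

Definition K_integrand (k : R) (theta : R) : R :=
  / sqrt (1 - k ^ 2 * (sin theta) ^ 2).

(* K(k) = int_0^{pi/2} (1 - k^2 sin^2 theta)^(-1/2) dtheta, as the Riemann
   integral (chosen via epsilon; the Riemann integral does not depend on the
   integrability proof, and for k^2 < 1 the integrand is continuous). *)
Definition ellipticK (k : R) : R :=
  epsilon (inhabits 0)
    (fun I => exists pr : Riemann_integrable (K_integrand k) 0 (PI / 2),
                RiemannInt pr = I).

Definition cJ (mu : R) : R := -1 - 2 * sqrt (mu * (1 - mu)).

Definition kE2 (mu c : R) : R :=
  / 2 * (1 - (1 - 2 * mu - c) / sqrt (c ^ 2 - 2 * (1 - 2 * mu) * c + 1)).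

Definition kM2 (mu c : R) : R :=
  / 2 * (1 + (c + 1 - 2 * mu) / sqrt (c ^ 2 + 2 * (1 - 2 * mu) * c + 1)).

Definition RE_ext (mu c : R) : R :=
  PI / 2 * / (sqrt (1 - 2 * kE2 mu c) * ellipticK (sqrt (kE2 mu c))).

Definition RM_ext (mu c : R) : R :=
  PI / 2 * / (sqrt (1 - 2 * kM2 mu c) * ellipticK (sqrt (kM2 mu c))).

(* Main.v *)
Require Import Defs.
From Stdlib Require Import Reals Lra ClassicalEpsilon.
Open Scope R_scope.

Lemma integrand_ge1 (k2 : R) (x : R) : 0 <= k2 < 1 ->
  1 <= K_integrand (sqrt k2) x.
Proof.
  intros [h0 h1]. unfold K_integrand. rewrite pow2_sqrt by lra.
  assert (hs : 0 <= sin x ^ 2 <= 1).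
  { pose proof (sin2 x). unfold Rsqr in *. pose proof (cos x * cos x) as _.
    split. apply pow2_ge_0. assert (0 <= cos x ^ 2) by apply pow2_ge_0.
    simpl in *. nra. }
  assert (h2 : 0 < 1 - k2 * sin x ^ 2 <= 1).
  { assert (k2 * sin x ^ 2 <= k2 * 1) by (apply Rmult_le_compat_l; lra).
    assert (0 <= k2 * sin x ^ 2) by (apply Rmult_le_pos; lra). lra. }
  assert (h3 : 0 < sqrt (1 - k2 * sin x ^ 2)) by (apply sqrt_lt_R0; lra).
  assert (h4 : sqrt (1 - k2 * sin x ^ 2) <= 1).
  { rewrite <- sqrt_1 at 2. apply sqrt_le_1_alt. lra. }
  apply Rle_trans with (/ 1); [rewrite Rinv_1; lra | apply Rinv_le_contravar; lra].
Qed.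

Lemma integrand_cont (k2 : R) (x : R) : 0 <= k2 < 1 ->
  continuity_pt (K_integrand (sqrt k2)) x.
Proof.
  intros hk.
  assert (hs : forall y, 0 < 1 - sqrt k2 ^ 2 * sin y ^ 2).
  { intro y. rewrite pow2_sqrt by lra.
    assert (0 <= sin y ^ 2 <= 1).
    { pose proof (sin2 y). unfold Rsqr in *. split. apply pow2_ge_0.
      assert (0 <= cos y ^ 2) by apply pow2_ge_0. simpl in *. nra. }
    assert (k2 * sin y ^ 2 <= k2 * 1) by (apply Rmult_le_compat_l; lra). lra. }
  unfold K_integrand.
  change (fun theta => / sqrt (1 - sqrt k2 ^ 2 * sin theta ^ 2)) with
    (inv_fct (comp sqrt (fun theta => 1 - sqrt k2 ^ 2 * sin theta ^ 2))).
  apply continuity_pt_inv.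
  - apply continuity_pt_comp.
    + reg.
    + apply continuity_pt_sqrt. specialize (hs x). lra.
  - unfold comp. specialize (hs x). pose proof (sqrt_lt_R0 _ hs). lra.
Qed.

Lemma K_ge (k2 : R) : 0 <= k2 < 1 -> PI / 2 <= ellipticK (sqrt k2).
Proof.
  intros hk. pose proof PI_RGT_0.
  assert (pr : Riemann_integrable (K_integrand (sqrt k2)) 0 (PI / 2)).
  { apply continuity_implies_RiemannInt. lra. intros; now apply integrand_cont. }
  unfold ellipticK.
  destruct (epsilon_spec (inhabits 0)
    (fun I => exists pr : Riemann_integrable (K_integrand (sqrt k2)) 0 (PI / 2),
                RiemannInt pr = I) (ex_intro _ _ (ex_intro _ pr eq_refl)))
    as [pr' <-].
  pose proof (@RiemannInt_P19 (fct_cte 1) _ 0 (PI/2) (RiemannInt_P14 0 (PI/2) 1) pr')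
    as H1.
  rewrite RiemannInt_P15 in H1. unfold fct_cte in H1.
  assert (1 * (PI / 2 - 0) <= RiemannInt pr').
  { apply H1. lra. intros; now apply integrand_ge1. }
  lra.
Qed.

Lemma R_lt2 (k2 : R) : 0 <= k2 -> 1 - 2 * k2 > /4 ->
  PI / 2 * / (sqrt (1 - 2 * k2) * ellipticK (sqrt k2)) < 2.
Proof.
  intros h0 h1. pose proof PI_RGT_0.
  assert (hK : PI / 2 <= ellipticK (sqrt k2)) by (apply K_ge; lra).
  assert (hs : / 2 < sqrt (1 - 2 * k2)).
  { rewrite <- (sqrt_pow2 (/2)) by lra. apply sqrt_lt_1_alt. simpl; lra. }
  assert (hp : 0 < sqrt (1 - 2 * k2) * ellipticK (sqrt k2)) by nra.
  apply (Rmult_lt_reg_r (sqrt (1 - 2 * k2) * ellipticK (sqrt k2))); auto.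
  rewrite Rmult_assoc, Rinv_l by lra. nra.
Qed.

Theorem mainTheorem10 (mu : R) (hmu0 : 0 < mu) (hmu1 : mu <= / 2) (c : R)
  (hc : c < cJ mu) :
  RE_ext mu c < 2 /\ RM_ext mu c < 2.
Proof.
  unfold cJ in hc.
  set (s := sqrt (mu * (1 - mu))) in *.
  assert (hs0 : 0 <= s) by apply sqrt_pos.
  assert (hs2 : s * s = mu * (1 - mu)) by (apply sqrt_sqrt; nra).
  set (a := 1 - 2 * mu).
  split.
  - unfold RE_ext. apply R_lt2; unfold kE2; fold a.
    + set (D := c ^ 2 - 2 * a * c + 1).
      assert (hD : 0 < D) by (unfold D, a; nra).
      assert (hq : sqrt D * sqrt D = D) by (apply sqrt_sqrt; lra).
      assert (hq0 : 0 < sqrt D) by (apply sqrt_lt_R0; lra).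
      assert ((a - c) <= sqrt D).
      { apply Rsqr_incr_0_var; unfold Rsqr; try lra. rewrite hq. unfold D, a. nra. }
      assert ((a - c) / sqrt D <= 1).
      { apply (Rmult_le_reg_r (sqrt D)); auto. unfold Rdiv.
        rewrite Rmult_assoc, Rinv_l by lra. lra. }
      lra.
    + set (D := c ^ 2 - 2 * a * c + 1).
      assert (hD : 0 < D) by (unfold D, a; nra).
      assert (hq : sqrt D * sqrt D = D) by (apply sqrt_sqrt; lra).
      assert (hq0 : 0 < sqrt D) by (apply sqrt_lt_R0; lra).
      assert (/4 * sqrt D < a - c).
      { apply Rsqr_incrst_0; unfold Rsqr; try (unfold a; nra).
        replace (/ 4 * sqrt D * (/ 4 * sqrt D)) with (/16 * (sqrt D * sqrt D)) by field.
        rewrite hq. unfold D, a. nra. }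
      assert (/4 < (a - c) / sqrt D).
      { apply (Rmult_lt_reg_r (sqrt D)); auto. unfold Rdiv.
        rewrite Rmult_assoc, Rinv_l by lra. lra. }
      replace (1 - 2 * (/ 2 * (1 - (a - c) / sqrt D))) with ((a - c) / sqrt D) by (field; lra).
      lra.
  - unfold RM_ext, kM2. replace (c + 1 - 2 * mu) with (c + a) by (unfold a; ring). fold a. apply R_lt2.
    + set (D := c ^ 2 + 2 * a * c + 1).
      assert (hD : 0 < D) by (unfold D, a; nra).
      assert (hq : sqrt D * sqrt D = D) by (apply sqrt_sqrt; lra).
      assert (hq0 : 0 < sqrt D) by (apply sqrt_lt_R0; lra).
      assert (-(c + a) <= sqrt D).
      { apply Rsqr_incr_0_var; unfold Rsqr; try lra. rewrite hq. unfold D, a. nra. }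
      assert (-1 <= (c + a) / sqrt D).
      { apply (Rmult_le_reg_r (sqrt D)); auto. unfold Rdiv.
        rewrite Rmult_assoc, Rinv_l by lra. lra. }
      lra.
    + set (D := c ^ 2 + 2 * a * c + 1).
      assert (hD : 0 < D) by (unfold D, a; nra).
      assert (hq : sqrt D * sqrt D = D) by (apply sqrt_sqrt; lra).
      assert (hq0 : 0 < sqrt D) by (apply sqrt_lt_R0; lra).
      assert (hca : c + a < - 2 * s - 2 * mu) by (unfold a; lra).
      assert (/4 * sqrt D < -(c + a)).
      { apply Rsqr_incrst_0; unfold Rsqr; try nra.
        replace (/ 4 * sqrt D * (/ 4 * sqrt D)) with (/16 * (sqrt D * sqrt D)) by field.
        rewrite hq. unfold D. unfold a in *. nra. }
      assert (/4 < -(c + a) / sqrt D).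
      { apply (Rmult_lt_reg_r (sqrt D)); auto. unfold Rdiv.
        rewrite Rmult_assoc, Rinv_l by lra. lra. }
      replace (1 - 2 * (/ 2 * (1 + (c + a) / sqrt D))) with (-(c + a) / sqrt D) by (field; lra).
      lra.
Qed.
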